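(* Let $M$ be a $0/1$-matrix, let $B$ be a block of $M$, and let $i,j$ be two entries of the input boundary $B^-$ with $j>i$ in the input-boundary order, each of which reaches at least one entry of the output boundary $B^+$. Then $\sigma_A(j)\ge\sigma_A(i)$ and $\sigma_Z(j)\ge\sigma_Z(i)$ (in the output-boundary order).
   Context: Let $M$ be an $m\times n$ $0/1$-matrix with entries indexed $(r,s)$ (rows increasing from bottom to top, columns from left to right). A path from $(k,l)$ to $(i,j)$ is a sequence of $1$-entries starting at $(k,l)$ and ending at $(i,j)$ in which each step goes from $(r,s)$ to $(r+1,s)$, $(r,s+1)$ or $(r+1,s+1)$; $(i,j)$ is reachable from $(k,l)$ if such a path exists. A block $B$ is the submatrix formed by rows $r^-\le r\le r^+$ and columns $s^-\le s\le s^+$. Its input boundary $B^-$ consists of the entries in row $r^-$ or column $s^-$ of $B$, ordered: first row $r^-$ from column $s^+$ down to $s^-$, then the remaining entries of column $s^-$ from row $r^-+1$ up to $r^+$. Its output boundary $B^+$ consists of the entries in row $r^+$ or column $s^+$ of $B$, ordered: first column $s^+$ from row $r^-$ up to $r^+$, then the remaining entries of row $r^+$ from column $s^+-1$ down to $s^-$. For an entry $i\in B^-$, $\sigma_A(i)$ and $\sigma_Z(i)$ denote the first and the last entry of $B^+$ (in the output-boundary order) that is reachable from $i$. *)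

(* Defs.v *)
From mathcomp Require Import all_boot all_order all_algebra.
Set Implicit Arguments. Unset Strict Implicit. Unset Printing Implicit Defensive.

(* Entries of an m x n 0/1-matrix M : 'M[bool]_(m,n) are pairs (r, s) :
   'I_m * 'I_n; row index r increases from bottom to top, column index s
   from left to right. *)
Definition entry (m n : nat) := ('I_m * 'I_n)%type.

Section Reach.
Variables (m n : nat) (M : 'M[bool]_(m, n)).

Definition one (p : entry m n) : bool := M p.1 p.2.

Definition step (p q : entry m n) : bool :=
  [|| (val q.1 == (val p.1).+1) && (val q.2 == val p.2),
      (val q.1 == val p.1) && (val q.2 == (val p.2).+1)
    | (val q.1 == (val p.1).+1) && (val q.2 == (val p.2).+1)].

Definition step1 (p q : entry m n) : bool := step p q && one q.

Definition reachable (a b : entry m n) : bool := one a && connect step1 a b.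

(* Block with rows rlo <= r <= rhi and columns slo <= s <= shi. *)
Variables (rlo rhi : 'I_m) (slo shi : 'I_n).

Definition in_boundary : seq (entry m n) :=
  [seq (rlo, s) | s <- [seq s : 'I_n <- rev (enum 'I_n) | (slo <= s <= shi)%N]]
  ++ [seq (r, slo) | r <- [seq r : 'I_m <- enum 'I_m | (rlo < r <= rhi)%N]].

Definition out_boundary : seq (entry m n) :=
  [seq (r, shi) | r <- [seq r : 'I_m <- enum 'I_m | (rlo <= r <= rhi)%N]]
  ++ [seq (rhi, s) | s <- [seq s : 'I_n <- rev (enum 'I_n) | (slo <= s < shi)%N]].

Definition sigmaA (i : entry m n) : entry m n :=
  head i [seq o <- out_boundary | reachable i o].
Definition sigmaZ (i : entry m n) : entry m n :=
  last i [seq o <- out_boundary | reachable i o].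

End Reach.

(* Main.v *)
Require Import Defs.
From mathcomp Require Import all_boot all_order all_algebra.
From mathcomp Require Import zify.
From Stdlib Require Import Lia.

Module Helpers.
Set Implicit Arguments. Unset Strict Implicit. Unset Printing Implicit Defensive.

Section Order2.
Variables (m n : nat).
Definition RR (c : entry m n) : nat := c.1.
Definition SS (c : entry m n) : nat := c.2.
Definition lt2 (x y : entry m n) : bool :=
  [&& RR x <= RR y, SS y <= SS x & (RR x < RR y) || (SS y < SS x)].

Lemma lt2_trans : transitive lt2.
Proof.
move=> y x z /and3P[h1 h2 h3] /and3P[h4 h5 h6]; apply/and3P; split; try lia.
Qed.

Lemma lt2_irr : irreflexive lt2.
Proof. move=> x; apply/negP=> /and3P[_ _]; lia. Qed.

Lemma enum_sorted k : sorted (fun a b : 'I_k => (a < b)%N) (enum 'I_k).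
Proof. by rewrite -(sorted_map (f:=val) (e':=ltn)) val_enum_ord iota_ltn_sorted. Qed.

Lemma enum_rsorted k : sorted (fun a b : 'I_k => (b < a)%N) (rev (enum 'I_k)).
Proof. by rewrite rev_sorted; apply: enum_sorted. Qed.

Variables (rlo rhi : 'I_m) (slo shi : 'I_n).

Lemma in_pairwise : pairwise lt2 (in_boundary rlo rhi slo shi).
Proof.
rewrite /in_boundary pairwise_cat; apply/and3P; split.
- apply/allrelP => x y /mapP[s] + -> /mapP[r] + ->.
  rewrite !mem_filter => /andP[/andP[h1 h2] _] /andP[/andP[h3 h4] _].
  rewrite /lt2 /RR /SS /=; apply/and3P; split; lia.
- rewrite -sorted_pairwise; last exact: lt2_trans.
  rewrite sorted_map; apply: sorted_filter.
    by move=> a b c; rewrite /relpre /lt2 /RR /SS /= => /and3P[? ? ?] /and3P[? ? ?]; apply/and3P; split; lia.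
  apply: sub_sorted (enum_rsorted n) => a b; rewrite /relpre /lt2 /RR /SS /= => h.
  apply/and3P; split; lia.
- rewrite -sorted_pairwise; last exact: lt2_trans.
  rewrite sorted_map; apply: sorted_filter.
    by move=> a b c; rewrite /relpre /lt2 /RR /SS /= => /and3P[? ? ?] /and3P[? ? ?]; apply/and3P; split; lia.
  apply: sub_sorted (enum_sorted m) => a b; rewrite /relpre /lt2 /RR /SS /= => h.
  apply/and3P; split; lia.
Qed.

Lemma out_pairwise : pairwise lt2 (out_boundary rlo rhi slo shi).
Proof.
rewrite /out_boundary pairwise_cat; apply/and3P; split.
- apply/allrelP => x y /mapP[s] + -> /mapP[r] + ->.
  rewrite !mem_filter => /andP[/andP[h1 h2] _] /andP[/andP[h3 h4] _].
  rewrite /lt2 /RR /SS /=; apply/and3P; split; lia.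
- rewrite -sorted_pairwise; last exact: lt2_trans.
  rewrite sorted_map; apply: sorted_filter.
    by move=> a b c; rewrite /relpre /lt2 /RR /SS /= => /and3P[? ? ?] /and3P[? ? ?]; apply/and3P; split; lia.
  apply: sub_sorted (enum_sorted m) => a b; rewrite /relpre /lt2 /RR /SS /= => h.
  apply/and3P; split; lia.
- rewrite -sorted_pairwise; last exact: lt2_trans.
  rewrite sorted_map; apply: sorted_filter.
    by move=> a b c; rewrite /relpre /lt2 /RR /SS /= => /and3P[? ? ?] /and3P[? ? ?]; apply/and3P; split; lia.
  apply: sub_sorted (enum_rsorted n) => a b; rewrite /relpre /lt2 /RR /SS /= => h.
  apply/and3P; split; lia.
Qed.
End Order2.

Section Paths.
Variables (m n : nat) (M : 'M[bool]_(m, n)).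
Local Notation e := (step1 M).

Lemma entry_eq (x y : entry m n) : RR x = RR y -> SS x = SS y -> x = y.
Proof.
case: x => a b; case: y => c d; rewrite /RR /SS /= => h1 h2.
by congr pair; apply: val_inj.
Qed.

Lemma step1_prop p q : e p q ->
  [/\ RR p <= RR q <= (RR p).+1, SS p <= SS q <= (SS p).+1 &
      (RR p < RR q) || (SS p < SS q)].
Proof.
case: p q => [[a ha] [b hb]] [[c hc] [d hd]].
rewrite /step1 /step /RR /SS /= => /andP[+ _].
case/or3P => /andP[/eqP h1 /eqP h2]; rewrite h1 h2; split; lia.
Qed.

Lemma path_mono x P z : path e x P -> z \in x :: P -> RR x <= RR z /\ SS x <= SS z.
Proof.
elim: P x => [|y P IH] x /=.
  by move=> _; rewrite inE => /eqP ->.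
case/andP=> hxy hp; rewrite inE => /orP[/eqP -> //|hz].
have [h1 h2 _] := step1_prop hxy; have [h3 h4] := IH y hp hz; lia.
Qed.

Lemma cover x P r : path e x P -> RR x <= r <= RR (last x P) ->
  exists2 p, p \in x :: P & RR p = r.
Proof.
elim: P x => [|y P IH] x /=.
  by move=> _ h; exists x; [exact: mem_head|lia].
case/andP=> hxy hp h.
have [h1 h2 _] := step1_prop hxy.
case: (ltnP (RR x) r) => hr.
  have [p hp1 hp2] := IH y hp ltac:(lia).
  by exists p => //; rewrite inE hp1 orbT.
by exists x; [exact: mem_head|lia].
Qed.

Lemma between x P p1 p2 q : path e x P -> p1 \in x :: P -> p2 \in x :: P ->
  RR p1 <= RR q <= RR p2 -> SS p2 <= SS q <= SS p1 -> q \in x :: P.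
Proof.
elim: P x p1 p2 => [|y P IH] x p1 p2 /=.
  move=> _; rewrite !inE => /eqP -> /eqP -> h1 h2.
  by rewrite (entry_eq (x := q) (y := x)) ?eqxx //; lia.
move=> hxP; have /andP[hxy hp] := hxP; rewrite inE => hp1; rewrite inE => hp2 h1 h2.
have [s1 s2 s3] := step1_prop hxy.
case/orP: hp1 => [/eqP E1|hp1]; case/orP: hp2 => [/eqP E2|hp2].
- subst; rewrite inE (entry_eq (x := q) (y := x)) ?eqxx //; lia.
- subst p1.
  have [m5 m6] := path_mono (x:=x) (P := y :: P) (z := p2) (hxP) ltac:(by rewrite inE hp2 orbT).
  case: (ltnP (RR x) (RR q)) => hq; last first.
    by rewrite inE (entry_eq (x := q) (y := x)) ?eqxx //; lia.
  have [m3 m4] := path_mono (x := y) hp hp2.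
  rewrite inE; apply/orP; right; apply: (IH y y p2) => //; first exact: mem_head.
  + lia.
  + lia.
- subst p2.
  have [m1 m2] := path_mono (x:=x) (P := y :: P) (z := p1) (hxP) ltac:(by rewrite inE hp1 orbT).
  case: (ltnP (SS x) (SS q)) => hq; last first.
    by rewrite inE (entry_eq (x := q) (y := x)) ?eqxx //; lia.
  have [m3 m4] := path_mono (x := y) hp hp1.
  rewrite inE; apply/orP; right; apply: (IH y p1 y) => //; first exact: mem_head.
  + lia.
  + lia.
- by rewrite inE; apply/orP; right; apply: (IH y p1 p2).
Qed.

Definition Aq (x : entry m n) P (q : entry m n) := has (fun p => (RR p <= RR q) && (SS q <= SS p)) (x :: P).
Definition Bq (x : entry m n) P (q : entry m n) := has (fun p => (RR q <= RR p) && (SS p <= SS q)) (x :: P).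

Lemma cross_aux x P q Q : path e x P -> path e q Q -> Aq x P q ->
  RR x <= RR q -> Bq x P (last q Q) -> RR (last q Q) <= RR (last x P) ->
  exists2 c, c \in q :: Q & c \in x :: P.
Proof.
move=> hP; elim: Q q => [|q' Q IH] q /= hQ hA hx.
  move=> hB _; exists q; first exact: mem_head.
  case/hasP: hA => p1 h1 /andP[a1 a2]; case/hasP: hB => p2 h2 /andP[b1 b2].
  apply: (between hP h1 h2); lia.
case/andP: hQ => hqq hQ hB hl.
case hBq: (Bq x P q).
  exists q; first exact: mem_head.
  case/hasP: hA => p1 h1 /andP[a1 a2]; case/hasP: hBq => p2 h2 /andP[b1 b2].
  apply: (between hP h1 h2); lia.
have [s1 s2 s3] := step1_prop hqq.
have [l1 l2] := path_mono (x := q') hQ (mem_last q' Q).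
have [p hp hpr] : exists2 p, p \in x :: P & RR p = RR q.
  apply: cover hP _; apply/andP; split => //.
  apply: leq_trans hl; apply: leq_trans l1; by case/andP: s1.
have hps : SS q < SS p.
  move/negbT: hBq => /hasPn /(_ p hp); rewrite hpr leqnn /=; lia.
have hA' : Aq x P q'.
  apply/hasP; exists p => //; apply/andP; split; lia.
have hx' : RR x <= RR q' by lia.
case: (IH q' hQ hA' hx' hB hl) => c hc1 hc2.
by exists c => //; rewrite inE hc1 orbT.
Qed.

Lemma connect_suffix x P y : path e x P -> y \in x :: P -> connect e y (last x P).
Proof.
elim: P x y => [|z P IH] x y /=.
  by move=> _; rewrite inE => /eqP ->; apply: connect0.
case/andP=> hxz hp; rewrite in_cons => /orP[/eqP ->|hy]; last exact: IH hp hy.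
apply: (@connect_trans _ _ z); first exact: connect1.
by apply: IH hp _; exact: mem_head.
Qed.

Lemma cross i j a b : reachable M i a -> reachable M j b ->
  RR i <= RR j -> SS j <= SS i -> RR b <= RR a -> SS a <= SS b ->
  reachable M i b /\ reachable M j a.
Proof.
case/andP=> oi /connectP[P hP ->]; case/andP=> oj /connectP[Q hQ ->] h1 h2 h3 h4.
have hA : Aq i P j.
  by apply/hasP; exists i; [exact: mem_head| apply/andP; split].
have hB : Bq i P (last j Q).
  by apply/hasP; exists (last i P); [exact: mem_last| apply/andP; split].
case: (cross_aux hP hQ hA h1 hB h3) => c hc1 hc2.
split; apply/andP; split => //.
- exact: (@connect_trans _ _ c _ _ (path_connect hP hc2) (connect_suffix hQ hc1)).
- exact: (@connect_trans _ _ c _ _ (path_connect hQ hc1) (connect_suffix hP hc2)).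
Qed.
End Paths.

Section SeqL.
Variables (T : eqType) (p : pred T) (x0 : T).

Lemma head_props s : has p s -> head x0 (filter p s) \in s /\ p (head x0 (filter p s)).
Proof.
rewrite has_filter; case E: (filter p s) => [|h l] //= _.
have : h \in filter p s by rewrite E mem_head.
by rewrite mem_filter => /andP[].
Qed.

Lemma last_props s : has p s -> last x0 (filter p s) \in s /\ p (last x0 (filter p s)).
Proof.
rewrite has_filter; case E: (filter p s) => [|h l] //= _.
have : last h l \in filter p s by rewrite E mem_last.
by rewrite mem_filter => /andP[].
Qed.

Lemma head_min s o : o \in s -> p o -> index (head x0 (filter p s)) s <= index o s.
Proof.
elim: s => [|x s IH] //=; rewrite in_cons => /orP[/eqP <-|ho] po.
  by rewrite po /= eqxx.
case px: (p x) => /=; first by rewrite eqxx.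
have hx : (x == o) = false by apply/negbTE; apply/eqP => E; rewrite E po in px.
have [hh ph] := head_props (introT hasP (ex_intro2 _ _ o ho po)).
have hx' : (x == head x0 (filter p s)) = false.
  by apply/negbTE; apply/eqP => E; rewrite -E px in ph.
by rewrite hx hx' ltnS IH.
Qed.

Lemma last_max s o : uniq s -> o \in s -> p o -> index o s <= index (last x0 (filter p s)) s.
Proof.
elim: s => [|x s IH] //= /andP[xs us]; rewrite in_cons => /orP[/eqP <-|ho] po.
  by rewrite eqxx.
have [hl pl] := last_props (introT hasP (ex_intro2 _ _ o ho po)).
have hx : (x == o) = false by apply/negbTE; apply/eqP => E; rewrite E ho in xs.
have E : last x0 (if p x then x :: filter p s else filter p s) = last x0 (filter p s).
  case: (p x) => //=; case E: (filter p s) => [|h l] //=.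
  by move: (introT hasP (ex_intro2 _ _ o ho po)); rewrite has_filter E.
rewrite E hx.
have hx' : (x == last x0 (filter p s)) = false.
  by apply/negbTE; apply/eqP => E'; rewrite E' hl in xs.
by rewrite hx' ltnS IH.
Qed.
End SeqL.

End Helpers.
Import Helpers.

Theorem corollary2 (m n : nat) (M : 'M[bool]_(m, n))
  (rlo rhi : 'I_m) (slo shi : 'I_n) (i j : entry m n) :
  (rlo <= rhi)%N -> (slo <= shi)%N ->
  i \in in_boundary rlo rhi slo shi ->
  j \in in_boundary rlo rhi slo shi ->
  (index i (in_boundary rlo rhi slo shi) < index j (in_boundary rlo rhi slo shi))%N ->
  has (reachable M i) (out_boundary rlo rhi slo shi) ->
  has (reachable M j) (out_boundary rlo rhi slo shi) ->
  (index (sigmaA M rlo rhi slo shi i) (out_boundary rlo rhi slo shi)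
     <= index (sigmaA M rlo rhi slo shi j) (out_boundary rlo rhi slo shi))%N /\
  (index (sigmaZ M rlo rhi slo shi i) (out_boundary rlo rhi slo shi)
     <= index (sigmaZ M rlo rhi slo shi j) (out_boundary rlo rhi slo shi))%N.
Proof.
move=> _ _ hi hj hij hri hrj.
have srt_in := pairwise_sorted (in_pairwise rlo rhi slo shi).
have srt_out := pairwise_sorted (out_pairwise rlo rhi slo shi).
have us := pairwise_uniq (@lt2_irr m n) (out_pairwise rlo rhi slo shi).
have /and3P[o1 o2 _] := sorted_ltn_index (@lt2_trans m n) srt_in i j hi hj hij.
rewrite /sigmaA /sigmaZ; split; rewrite leqNgt; apply/negP => hlt.
- have [ha ra] := head_props i hri.
  have [hb rb] := head_props j hrj.
  have /and3P[o3 o4 _] := sorted_ltn_index (@lt2_trans m n) srt_out _ _ hb ha hlt.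
  have [rib _] := cross ra rb o1 o2 o3 o4.
  have := head_min i hb rib; rewrite leqNgt hlt //.
- have [ha ra] := last_props i hri.
  have [hb rb] := last_props j hrj.
  have /and3P[o3 o4 _] := sorted_ltn_index (@lt2_trans m n) srt_out _ _ hb ha hlt.
  have [_ rja] := cross ra rb o1 o2 o3 o4.
  have := last_max j us ha rja; rewrite leqNgt hlt //.
Qed.
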